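(* Let $n\ge 1$ be an integer and let $\alpha_0,\ldots,\alpha_{2n+1},\eta\in\mathbb{C}$ with $\sum_{i=0}^{2n+1}\alpha_i=1$. Consider the Hamiltonian system \[ \frac{dx_i}{dt}=\frac{\partial H}{\partial y_i},\qquad \frac{dy_i}{dt}=-\frac{\partial H}{\partial x_i},\qquad i=0,\ldots,n, \] with Hamiltonian \[ H=\frac1t\sum_{i=0}^{n}\Big\{\tfrac12 x_i^2y_i^2-\alpha_{2i+2}^{2n-2i-1}x_iy_i+\sum_{j=0}^{i-1}x_i(x_iy_i+\alpha_{2i+1})y_j\Big\}+\frac{1}{1-t}\sum_{i=0}^{n}\sum_{j=0}^{n}x_i(x_iy_i+\alpha_{2i+1})y_j , \] where the dependent variables satisfy $\sum_{i=0}^n x_iy_i+\eta=0$. Then this system admits the specialization $y_i=0$ $(i=0,\ldots,n)$, $\eta=0$ (i.e. with $\eta=0$, setting $y_0=\cdots=y_n\equiv0$ is compatible with the system), and under this specialization the vector $\mathbf{x}={}^t(x_0,\ldots,x_n)$ satisfies the linear system on $\mathbb{P}^1(\mathbb{C})$ \[ \frac{d\mathbf{x}}{dt}=\Big(\frac{A_0}{t}+\frac{A_1}{1-t}\Big)\mathbf{x}, \] with \[ A_0=\sum_{i=0}^{n-1}\big(-\alpha_{2i+2}^{2n-2i-1}\big)E_{i,i}+\sum_{i=0}^{n-1}\sum_{j=i+1}^{n}\alpha_{2j+1}E_{i,j},\qquad A_1=\sum_{i=0}^{n}\sum_{j=0}^{n}\alpha_{2j+1}E_{i,j}. \] Furthermore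 this linear system is of Fuchsian type with regular singular points at $t=0,1,\infty$, and the eigenvalues of its residue matrices are: $-\alpha_2^{2n-1},-\alpha_4^{2n-3},\ldots,-\alpha_{2n}^{1},0$ at $t=0$; $0,\ldots,0$ ($n$ times), $-\sum_{i=0}^n\alpha_{2i+1}$ at $t=1$; $\alpha_1^{2n},\alpha_3^{2n-2},\ldots,\alpha_{2n-1}^{2},\alpha_{2n+1}$ at $t=\infty$.
   Context: Indices of the parameters $\alpha_i$ are taken modulo $2n+2$. For integers $k,l$, $\alpha_k^l=0$ if $l<0$ and $\alpha_k^l=\sum_{i=k}^{k+l}\alpha_i$ if $l\ge0$. $E_{i,j}=(\delta_{i,k}\delta_{j,l})_{k,l=0}^{n}$ denotes the $(n+1)\times(n+1)$ matrix unit (rows and columns indexed $0,\ldots,n$). *)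

(* Defs.v *)
From HB Require Import structures.
From mathcomp Require Import all_boot all_order all_algebra.
From mathcomp Require Import mpoly.
Set Implicit Arguments. Unset Strict Implicit. Unset Printing Implicit Defensive.
Import Order.TTheory GRing.Theory Num.Theory.
Local Open Scope ring_scope.

Section Defs.
Variable K : numClosedFieldType.
Variable n : nat.

(* parameters alpha_0, ..., alpha_{2n+1}; indices taken modulo 2n+2 *)
Definition aidx (a : 'I_(n.*2.+2) -> K) (k : nat) : K := a (inZp k).

(* alpha_k^l = 0 if l < 0, and sum_{i=k}^{k+l} alpha_i if l >= 0 *)
Definition asum (a : 'I_(n.*2.+2) -> K) (k : nat) (l : int) : K :=
  if (l < 0)%R then 0 else \sum_(k <= i < k + `|l|%N.+1) aidx a i.

Definition xv (i : 'I_n.+1) : {mpoly K[n.+1 + n.+1]} := 'X_(lshift n.+1 i).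
Definition yv (i : 'I_n.+1) : {mpoly K[n.+1 + n.+1]} := 'X_(rshift n.+1 i).

Definition ham (a : 'I_(n.*2.+2) -> K) (t : K) : {mpoly K[n.+1 + n.+1]} :=
  t^-1 *: (\sum_(i < n.+1)
      ( 2^-1 *: (xv i ^+ 2 * yv i ^+ 2)
      - asum a (i.*2.+2) (n.*2%:Z - i.*2%:Z - 1) *: (xv i * yv i)
      + \sum_(j < n.+1 | (j < i)%N)
          xv i * (xv i * yv i + (aidx a i.*2.+1)%:MP) * yv j))
  + (1 - t)^-1 *: (\sum_(i < n.+1) \sum_(j < n.+1)
          xv i * (xv i * yv i + (aidx a i.*2.+1)%:MP) * yv j).

Definition pt (x y : 'I_n.+1 -> K) (k : 'I_(n.+1 + n.+1)) : K :=
  match split k with inl i => x i | inr i => y i end.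

Definition dxdt (a : 'I_(n.*2.+2) -> K) (t : K) (x y : 'I_n.+1 -> K)
  (i : 'I_n.+1) : K := (mderiv (rshift n.+1 i) (ham a t)).@[pt x y].
Definition dydt (a : 'I_(n.*2.+2) -> K) (t : K) (x y : 'I_n.+1 -> K)
  (i : 'I_n.+1) : K := - (mderiv (lshift n.+1 i) (ham a t)).@[pt x y].

(* residue matrices; E_{i,j} = delta_mx i j *)
Definition A0 (a : 'I_(n.*2.+2) -> K) : 'M[K]_n.+1 :=
  \sum_(i < n.+1 | (i < n)%N)
      (- asum a (i.*2.+2) (n.*2%:Z - i.*2%:Z - 1)) *: delta_mx i i
  + \sum_(i < n.+1 | (i < n)%N) \sum_(j < n.+1 | (i < j)%N)
      aidx a j.*2.+1 *: delta_mx i j.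
Definition A1 (a : 'I_(n.*2.+2) -> K) : 'M[K]_n.+1 :=
  \sum_(i < n.+1) \sum_(j < n.+1) aidx a j.*2.+1 *: delta_mx i j.

End Defs.

(* A linear system dx/dt = A(t) x on P^1 is Fuchsian with finite singular
   points poles`_k and residue matrices R`_k if A(t) = sum_k R_k/(t - a_k)
   (for t not a pole); its residue at infinity is then - sum_k R_k. *)
Definition fuchsian (K : fieldType) (m : nat) (A : K -> 'M[K]_m)
  (poles : seq K) (R : seq 'M[K]_m) : Prop :=
  size R = size poles /\
  forall t, t \notin poles ->
    A t = \sum_(k < size poles) (t - poles`_k)^-1 *: R`_k.

Definition res_infty (K : fieldType) (m : nat) (R : seq 'M[K]_m) : 'M[K]_m :=
  - \sum_(B <- R) B.

(* eigenvalues with multiplicities: roots of the characteristic polynomial *)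
Definition spectrum_is (K : fieldType) (m : nat) (B : 'M[K]_m)
  (ev : seq K) : Prop :=
  char_poly B = \prod_(l <- ev) ('X - l%:P).

(* Main.v *)
Require Import Defs.
From HB Require Import structures.
From mathcomp Require Import all_boot all_order all_algebra.
From mathcomp Require Import mpoly.
From mathcomp Require Import zify ring.
Import Order.TTheory GRing.Theory Num.Theory.
Local Open Scope ring_scope.

Lemma sum_pick (K : nzRingType) m (P : pred 'I_m) (F : 'I_m -> K) r :
  (forall i, P i -> i != r -> F i = 0) ->
  \sum_(i < m | P i) F i = if P r then F r else 0.
Proof.
move=> H; case: (boolP (P r)) => Pr.
  rewrite (bigD1 r) //= big1 ?addr0 // => i /andP[Pi ir]; exact: H.

rewrite big1 // => i Pi; apply: H => //; apply/eqP => ir; by rewrite -ir Pi in Pr.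
Qed.

Lemma char_poly_tr (R : comNzRingType) m (A : 'M[R]_m) :
  char_poly A^T = char_poly A.
Proof.
rewrite /char_poly -det_tr; congr (\det _).
by apply/matrixP => i j; rewrite !mxE eq_sym.
Qed.

Lemma char_poly_conj (R : comNzRingType) m (P C A : 'M[R]_m) :
  P *m C = 1%:M -> char_poly (P *m A *m C) = char_poly A.
Proof.
move=> PC; rewrite /char_poly /char_poly_mx !map_mxM.
have E : ('X%:M : 'M[{poly R}]_m) = map_mx polyC P *m 'X%:M *m map_mx polyC C.
  rewrite mul_mx_scalar -scalemxAl -map_mxM PC.
  by apply/matrixP=> i j; rewrite !mxE; case: (i == j); rewrite /= ?mulr1 ?mulr0.
rewrite {1}E.
rewrite -mulmxBl -mulmxBr !det_mulmx mulrAC -det_mulmx -map_mxM PC.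
by rewrite map_scalar_mx det_scalar rmorph1 expr1n mul1r.
Qed.


Section Mat.
Variable K : numClosedFieldType.
Variable n : nat.
Variable a : 'I_(n.*2.+2) -> K.

Let c (i : nat) := asum a (i.*2.+2) (n.*2%:Z - i.*2%:Z - 1).
Let w (j : nat) := aidx a j.*2.+1.

Lemma A1E r s : A1 a r s = w s.
Proof.
rewrite /A1 summxE (@sum_pick _ _ _ _ r); last first.
  move=> i _ ir; rewrite summxE big1 // => j _; rewrite !mxE.
  by rewrite eq_sym (negbTE ir) mulr0.
rewrite summxE (@sum_pick _ _ _ _ s); last first.
  by move=> j _ js; rewrite !mxE eqxx eq_sym (negbTE js) andbF mulr0.
by rewrite /= !mxE !eqxx /= mulr1.
Qed.

Lemma A0E r s : A0 a r s =
  if r == s then (if (r < n)%N then - c r else 0)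
  else if (r < s)%N then w s else 0.
Proof.
rewrite /A0 mxE !summxE.
rewrite (@sum_pick _ _ _ _ r); last first.
  by move=> i _ ir; rewrite !mxE eq_sym (negbTE ir) mulr0.
rewrite (@sum_pick _ _ _ _ r); last first.
  move=> i _ ir; rewrite summxE big1 // => j _.
  by rewrite !mxE eq_sym (negbTE ir) mulr0.
rewrite summxE (@sum_pick _ _ _ _ s); last first.
  by move=> j _ js; rewrite !mxE eqxx eq_sym (negbTE js) andbF mulr0.
rewrite !mxE !eqxx /= mulr1.
have ltn_r := ltn_ord r; have ltn_s := ltn_ord s.
case: (eqVneq r s) => [<-|rs].
  by rewrite ltnn /= mulr1; case: (r < n)%N; rewrite ?addr0.
have F0 : (false%:R : K) = 0 by [].
case: (ltnP r s) => rs'.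
  have -> : (r < n)%N by lia.
  by rewrite F0 mulr0 add0r.
by case: (r < n)%N; rewrite /= ?F0 ?mulr0 ?addr0.
Qed.


Lemma ltn_max (r : 'I_n.+1) : (r < n)%N = (r != ord_max).
Proof. by rewrite -val_eqE /=; have := ltn_ord r; lia. Qed.

Lemma spec_A0 : char_poly (A0 a) =
  \prod_(l <- rcons [seq - c i | i <- iota 0 n] 0) ('X - l%:P).
Proof.
rewrite -char_poly_tr char_poly_trig; last first.
  apply/is_trig_mxP => i j ij; rewrite mxE A0E.
  have -> : (j == i) = false by apply/negbTE; rewrite neq_ltn ij orbT.
  by rewrite ltnNge (ltnW ij).
rewrite big_ord_recr big_rcons /= big_map -[n in iota _ n]subn0 -/(index_iota 0 n).
rewrite big_mkord; congr (_ * _).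
  by apply: eq_bigr => i _; rewrite mxE A0E eqxx /= ltn_ord.
by rewrite mxE A0E eqxx /= ltnn.
Qed.


Lemma asum_split (i : nat) : (i < n)%N -> w i + c i = asum a (i.*2.+1) (n.*2%:Z - i.*2%:Z).
Proof.
move=> lin; rewrite /c /w /asum.
have -> : (n.*2%:Z - i.*2%:Z - 1 < 0) = false by lia.
have -> : (n.*2%:Z - i.*2%:Z < 0) = false by lia.
have -> : absz (n.*2%:Z - i.*2%:Z - 1)%R = (n.*2 - i.*2 - 1)%N by lia.
have -> : absz (n.*2%:Z - i.*2%:Z)%R = (n.*2 - i.*2)%N by lia.
rewrite [in RHS]big_ltn; last by lia.
congr (_ + _); congr (\sum_(_ <= _ < _) _); lia.
Qed.

Lemma c_n : c n = 0.
Proof. by rewrite /c /asum; have -> : (n.*2%:Z - n.*2%:Z - 1 < 0) by lia. Qed.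


Lemma RE r s : res_infty [:: A0 a; - A1 a] r s = w s - A0 a r s.
Proof.
rewrite /res_infty big_cons big_cons big_nil addr0.
have NE := A1E r s; move: (A0 a) (A1 a) NE => M N NE.
rewrite !mxE NE.
by rewrite opprD opprK addrC.
Qed.

Lemma spec_Rinf : char_poly (res_infty [:: A0 a; - A1 a]) =
  \prod_(l <- rcons [seq asum a (i.*2.+1) (n.*2%:Z - i.*2%:Z) | i <- iota 0 n]
        (aidx a n.*2.+1)) ('X - l%:P).
Proof.
rewrite char_poly_trig; last first.
  apply/is_trig_mxP => i j ij; rewrite RE A0E.
  have -> : (i == j) = false by apply/negbTE; rewrite neq_ltn ij.
  by rewrite ij subrr.
rewrite big_ord_recr big_rcons /= big_map -[n in iota _ n]subn0 -/(index_iota 0 n).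
rewrite big_mkord; congr (_ * _).
  apply: eq_bigr => i _; rewrite RE A0E eqxx /= ltn_ord.
  by rewrite opprK asum_split.
by rewrite RE A0E eqxx /= ltnn subr0.
Qed.


Definition Nm : 'M[K]_n.+1 := \matrix_(i, j) ((i < n)%N && (j == ord_max))%:R.

Lemma NmNm : Nm *m Nm = 0.
Proof.
apply/matrixP => i j; rewrite !mxE big1 // => k _; rewrite !mxE.
case: (eqVneq k ord_max) => [->|_]; last by rewrite andbF mul0r.
by rewrite ltnn /= mulr0.
Qed.

Lemma PC : (1%:M - Nm) *m (1%:M + Nm) = 1%:M.
Proof. by rewrite mulmxBl mul1mx mulmxDr mulmx1 NmNm addr0 addrK. Qed.

Lemma PBE r s : ((1%:M - Nm) *m - A1 a) r s = if (r < n)%N then 0 else - w s.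
Proof.
rewrite mulmxBl mul1mx mxE.
have NE : forall k l, (- A1 a) k l = - w l by move=> k l; rewrite mxE A1E.
rewrite NE; set T := (Nm *m _); rewrite mxE /T mxE (@sum_pick _ _ _ _ ord_max); last first.
  by move=> k _ /negbTE kn; rewrite mxE kn andbF mul0r.
rewrite /= mxE eqxx andbT NE.
by case: (r < n)%N; rewrite /= ?mul1r ?subrr // mul0r subr0.
Qed.

Lemma spec_mA1 : char_poly (- A1 a) =
  \prod_(l <- rcons (nseq n 0) (- \sum_(i < n.+1) aidx a i.*2.+1)) ('X - l%:P).
Proof.
rewrite -(@char_poly_conj _ _ _ _ (- A1 a) PC).
have ME : forall r s, ((1%:M - Nm) *m - A1 a *m (1%:M + Nm)) r s =
   ((1%:M - Nm) *m - A1 a) r s + \sum_k ((1%:M - Nm) *m - A1 a) r k * Nm k s.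
  move=> r s; rewrite mulmxDr mulmx1 mxE; congr (_ + _).
  by move: ((1%:M - Nm) *m - A1 a) => T; rewrite mxE.
rewrite char_poly_trig; last first.
  apply/is_trig_mxP => i j ij.
  have iln : (i < n)%N by have := ltn_ord j; lia.
  by rewrite ME PBE iln add0r big1 // => k _; rewrite PBE iln mul0r.
rewrite big_ord_recr big_rcons /= big_nseq -big_const_ord; congr (_ * _).
  apply: eq_bigr => i _; congr ('X - _%:P).
  have wi : (widen_ord (leqnSn n) i < n)%N := ltn_ord i.
  rewrite ME PBE wi add0r big1 ?subr0 // => k _.
  by rewrite PBE wi mul0r.
rewrite ME PBE ltnn; congr ('X - _%:P).
rewrite big_ord_recr [in RHS]big_ord_recr /= opprD.
have -> : ((1%:M - Nm) *m - A1 a) ord_max ord_max * Nm ord_max ord_max = 0.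
  by rewrite [Nm _ _]mxE ltnn mulr0.
rewrite addr0 addrC -[in RHS]sumrN; congr (_ + _); apply: eq_bigr => k _.
have wi : (widen_ord (leqnSn n) k < n)%N := ltn_ord k.
by rewrite PBE mxE ltnn wi eqxx mulr1.
Qed.

End Mat.


Section Ham.
Variable K : numClosedFieldType.
Variable n : nat.

Lemma dX m (k j : 'I_m) : mderiv k ('X_j : {mpoly K[m]}) = ((j == k)%:R)%:MP.
Proof.
rewrite mderivX mnm1E; case: (eqVneq j k) => [->|jk].
  have -> : (U_(k) - U_(k) = 0)%MM.
    by apply/mnmP => i; rewrite mnmBE subnn mnm0E.
  by rewrite mpolyX0 scale1r mpolyC1.
by rewrite scale0r mpolyC0.
Qed.

Notation xv := (@xv K n).
Notation yv := (@yv K n).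

Lemma dxx k i : mderiv (lshift n.+1 k) (xv i) = ((i == k)%:R)%:MP.
Proof. by rewrite /Defs.xv dX eq_lshift. Qed.
Lemma dxy k i : mderiv (lshift n.+1 k) (yv i) = 0.
Proof. by rewrite /Defs.yv dX eq_rlshift mpolyC0. Qed.
Lemma dyx k i : mderiv (rshift n.+1 k) (xv i) = 0.
Proof. by rewrite /Defs.xv dX eq_lrshift mpolyC0. Qed.
Lemma dyy k i : mderiv (rshift n.+1 k) (yv i) = ((i == k)%:R)%:MP.
Proof. by rewrite /Defs.yv dX eq_rshift. Qed.

Lemma ex (x y : 'I_n.+1 -> K) i : (xv i).@[pt x y] = x i.
Proof.
rewrite /Defs.xv mevalXU /pt; case: splitP => j /=; last by have := ltn_ord i; lia.
by move/val_inj => ->.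
Qed.
Lemma ey (x y : 'I_n.+1 -> K) i : (yv i).@[pt x y] = y i.
Proof.
rewrite /Defs.yv mevalXU /pt; case: splitP => j /=; first by have := ltn_ord j; lia.
by move=> /eqP; rewrite eqn_add2l => /eqP /val_inj ->.
Qed.



Definition D m (k : 'I_m) (v : 'I_m -> K) (p : {mpoly K[m]}) := (mderiv k p).@[v].
Arguments D {m}.

Lemma D_add m (k : 'I_m) (v : 'I_m -> K) : {morph @D m k v : p q / p + q}.
Proof. by move=> p q; rewrite /D mderivD mevalD. Qed.
Lemma D_sub m (k : 'I_m) (v : 'I_m -> K) (p q : {mpoly K[m]}) : D k v (p - q) = D k v p - D k v q.
Proof. by rewrite /D mderivB mevalB. Qed.
Lemma D_opp m (k : 'I_m) (v : 'I_m -> K) (p : {mpoly K[m]}) : D k v (- p) = - D k v p.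
Proof. by rewrite /D mderivN mevalN. Qed.
Lemma D0 m (k : 'I_m) (v : 'I_m -> K) : D k v (0 : {mpoly K[m]}) = 0.
Proof. by rewrite /D mderiv0 meval0. Qed.
Lemma D_sum m (k : 'I_m) (v : 'I_m -> K) I (r : seq I) (P : pred I) (F : I -> {mpoly K[m]}) :
  D k v (\sum_(i <- r | P i) F i) = \sum_(i <- r | P i) D k v (F i).
Proof. exact: (big_morph _ (@D_add m k v) (@D0 m k v)). Qed.
Lemma D_scale m (k : 'I_m) (v : 'I_m -> K) c (p : {mpoly K[m]}) : D k v (c *: p) = c * D k v p.
Proof. by rewrite /D mderivZ mevalZ. Qed.
Lemma D_mul m (k : 'I_m) (v : 'I_m -> K) (p q : {mpoly K[m]}) : D k v (p * q) = D k v p * p.@[v] * 0 + D k v p * q.@[v] + p.@[v] * D k v q.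
Proof. by rewrite /D mderivM mevalD !mevalM mulr0 add0r. Qed.
Lemma D_C m (k : 'I_m) (v : 'I_m -> K) c : D k v (c%:MP : {mpoly K[m]}) = 0.
Proof. by rewrite /D mderivC meval0. Qed.
Lemma E_sum m (v : 'I_m -> K) I (r : seq I) (P : pred I) (F : I -> {mpoly K[m]}) :
  (\sum_(i <- r | P i) F i).@[v] = \sum_(i <- r | P i) (F i).@[v].
Proof. exact: (big_morph _ (@mevalD _ _ v) (meval0 v)). Qed.

Lemma Dxx v k i : D (lshift n.+1 k) v (xv i) = (i == k)%:R.
Proof. by rewrite /D dxx mevalC. Qed.
Lemma Dxy v k i : D (lshift n.+1 k) v (yv i) = 0.
Proof. by rewrite /D dxy meval0. Qed.
Lemma Dyx v k i : D (rshift n.+1 k) v (xv i) = 0.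
Proof. by rewrite /D dyx meval0. Qed.
Lemma Dyy v k i : D (rshift n.+1 k) v (yv i) = (i == k)%:R.
Proof. by rewrite /D dyy mevalC. Qed.


Notation v0 x := (pt x (fun _ : 'I_n.+1 => (0 : K))).

Lemma DT_x x (c : K) k j i :
  D (lshift n.+1 i) (v0 x) (xv k * (xv k * yv k + c%:MP) * yv j) = 0.
Proof.
rewrite !(D_add, D_mul, D_C, Dxx, Dxy, ex, ey, mevalD, mevalM, mevalC).
by rewrite !(mulr0, mul0r, addr0, add0r).
Qed.

Lemma DT_y x (c : K) k j i :
  D (rshift n.+1 i) (v0 x) (xv k * (xv k * yv k + c%:MP) * yv j) = x k * c * (j == i)%:R.
Proof.
rewrite !(D_add, D_mul, D_C, Dyx, Dyy, ex, ey, mevalD, mevalM, mevalC).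
by rewrite !(mulr0, mul0r, addr0, add0r).
Qed.

Lemma DQ_x x (c : K) k i :
  D (lshift n.+1 i) (v0 x) (2^-1 *: (xv k ^+ 2 * yv k ^+ 2) - c *: (xv k * yv k)) = 0.
Proof.
rewrite !(D_add, D_opp, D_scale, D_mul, expr2, Dxx, Dxy, ex, ey, mevalD, mevalM).
by rewrite !(mulr0, mul0r, addr0, add0r, subr0, oppr0).
Qed.

Lemma DQ_y x (c : K) k i :
  D (rshift n.+1 i) (v0 x) (2^-1 *: (xv k ^+ 2 * yv k ^+ 2) - c *: (xv k * yv k)) =
  - (c * x k * (k == i)%:R).
Proof.
rewrite !(D_add, D_opp, D_scale, D_mul, expr2, Dyx, Dyy, ex, ey, mevalD, mevalM).
by rewrite !(mulr0, mul0r, addr0, add0r, sub0r, oppr0, mulrA).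
Qed.

Lemma dydt0 (a : 'I_(n.*2.+2) -> K) t x i : dydt a t x (fun _ => 0) i = 0.
Proof.
rewrite /dydt -/(D _ _ _) /ham.
rewrite !(D_add, D_scale, D_sum).
rewrite [X in t^-1 * X]big1; last first.
  move=> k _; rewrite D_add DQ_x D_sum big1 ?addr0 // => j _; exact: DT_x.
rewrite [X in (1 - t)^-1 * X]big1; last first.
  move=> k _; rewrite D_sum big1 // => j _; exact: DT_x.
by rewrite !mulr0 addr0 oppr0.
Qed.

End Ham.


Lemma dxdtE (K : numClosedFieldType) (n : nat) (a : 'I_(n.*2.+2) -> K) t x i :
  dxdt a t x (fun _ => 0) i =
       ((t^-1 *: A0 a + (1 - t)^-1 *: A1 a) *m \col_k x k) i ord0.
Proof.
have -> : dxdt a t x (fun _ => 0) i = @D K _ (rshift n.+1 i) (pt x (fun _ => 0)) (ham a t) by [].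
rewrite /ham !(D_add, D_scale, D_sum).
have AE : forall k, (t^-1 *: A0 a + (1-t)^-1 *: A1 a) i k = t^-1 * A0 a i k + (1-t)^-1 * A1 a i k.
  by move=> k; move: (A0 a) (A1 a) => M N; rewrite !mxE.
rewrite mxE !mulr_sumr -big_split /=; apply: eq_bigr => k _.
rewrite AE A0E A1E mxE.
have H2 : D K _ (rshift n.+1 i) (pt x (fun=> 0))
    (\sum_(j < n.+1) xv K k * (xv K k * yv K k + (aidx a k.*2.+1)%:MP) * yv K j)
    = aidx a k.*2.+1 * x k.
  rewrite D_sum (@sum_pick _ _ _ _ i) /=; last first.
    by move=> j _ /negbTE ji /=; rewrite DT_y ji mulr0.
  by rewrite DT_y eqxx mulr1 mulrC.
rewrite H2.
rewrite D_add DQ_y D_sum (@sum_pick _ _ _ _ i) /=; last first.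
  by move=> j _ /negbTE ji /=; rewrite DT_y ji mulr0.
rewrite DT_y eqxx mulr1.
have F0 : (false%:R : K) = 0 by [].
case: (eqVneq k i) => [->|ki].
  rewrite ltnn addr0 mulr1.
  case: (ltnP i n) => iln; first by ring.
  have -> : (i : nat) = n by have := ltn_ord i; lia.
  rewrite c_n; ring.
rewrite F0; case: (i < k)%N; ring.
Qed.

Theorem proposition2p3 (K : numClosedFieldType) (n : nat) (hn : (1 <= n)%N)
  (a : 'I_(n.*2.+2) -> K) (eta : K)
  (hsum : \sum_(i < n.*2.+2) a i = 1) (heta : eta = 0) :
  (* the specialization y = 0, eta = 0 is compatible with the system *)
  (forall (t : K), t != 0 -> t != 1 -> forall x : 'I_n.+1 -> K,
     \sum_(i < n.+1) x i * 0 + eta = 0 /\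
     forall i, dydt a t x (fun _ => 0) i = 0) /\
  (* under it, x satisfies dx/dt = (A0/t + A1/(1-t)) x *)
  (forall (t : K), t != 0 -> t != 1 -> forall x : 'I_n.+1 -> K,
     forall i, dxdt a t x (fun _ => 0) i =
       ((t^-1 *: A0 a + (1 - t)^-1 *: A1 a) *m \col_k x k) i ord0) /\
  (* Fuchsian with singular points 0, 1, infinity *)
  fuchsian (fun t => t^-1 *: A0 a + (1 - t)^-1 *: A1 a)
           [:: 0; 1] [:: A0 a; - A1 a] /\
  spectrum_is (A0 a)
    (rcons [seq - asum a (i.*2.+2) (n.*2%:Z - i.*2%:Z - 1) | i <- iota 0 n] 0) /\
  spectrum_is (- A1 a)
    (rcons (nseq n 0) (- \sum_(i < n.+1) aidx a i.*2.+1)) /\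
  spectrum_is (res_infty [:: A0 a; - A1 a])
    (rcons [seq asum a (i.*2.+1) (n.*2%:Z - i.*2%:Z) | i <- iota 0 n]
           (aidx a n.*2.+1)).
Proof.
subst eta.
split.
  move=> t _ _ x; split; last by move=> i; exact: dydt0.
  by rewrite big1 ?add0r // => i _; rewrite mulr0.
split; first by move=> t _ _ x i; exact: dxdtE.
split.
  split => // t _ /=.
  rewrite !big_ord_recl big_ord0 /= subr0 addr0.
  by rewrite scalerN -scaleNr -invrN opprB.
split; first exact: spec_A0.
split; first exact: spec_mA1.
exact: spec_Rinf.
Qed.
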